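(* (a) The Baire space $\mathcal{N}$ has a $\pi$-tree $\mathbf{F}$ such that $\mathrm{cofin}\,\omega\gg\mathrm{Rise}_{\mathbf{F}}(\mathcal{N})$. (b) The Sorgenfrey line $\mathcal{R}_{\mathcal{S}}$ has a $\pi$-tree $\mathbf{G}$ such that $\mathrm{cofin}\,\omega\gg\mathrm{Rise}_{\mathbf{G}}(\mathcal{R}_{\mathcal{S}})$. (c) If $X\subseteq\mathcal{R}_{\mathcal{S}}$ and $\mathcal{R}_{\mathcal{S}}\setminus X$ is at most countable, then the subspace $X$ has a $\pi$-tree $\mathbf{H}$ such that $\mathrm{cofin}\{2n+1:n\in\omega\}\gg\mathrm{Rise}_{\mathbf{H}}(X)$.
   Context: $\mathcal{N}$ is ${}^{\omega}\omega$ with the product topology ($\omega$ discrete); $\mathcal{R}_{\mathcal{S}}$ is the real line with the topology generated by half-open intervals $[a,b)$. For a set $B$, $\mathrm{cofin}\,B=\{B\setminus F: F\subseteq B\text{ finite}\}$. Neighbourhoods are not necessarily open. $\omega=\{0,1,2,\dots\}$, ${}^{<\omega}\omega$ is the set of finite sequences of natural numbers. A tree is a strict partial order in which the set of predecessors of every node is well-ordered; $\mathrm{height}(x)$ is the ordinal isomorphic to the set of predecessors of $x$; a branch is a maximal chain; $\mathrm{sons}(x)$ is the set of immediate successors of $x$; $0$ denotes the least node. A foliage tree is a pair $\mathbf{F}=(T,l)$ with $T$ a tree (skeleton) and $l$ a function on its nodes, $\mathbf{F}_x:=l(x)$; tree notions apply via the skeleton. $\mathrm{shoot}_{\mathbf{F}}(v)=\{\bigcup_{x\in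 C}\mathbf{F}_x: C\text{ a cofinite subset of }\mathrm{sons}_{\mathbf{F}}(v)\}$; $\mathrm{scope}_{\mathbf{F}}(p)=\{x:p\in\mathbf{F}_x\}$. For families $\gamma,\delta$ of sets, $\gamma\gg\delta$ means every nonempty $D\in\delta$ contains some nonempty $G\in\gamma$. $\mathrm{rise}_{\mathbf{F}}(p,U)=\{\mathrm{height}_{\mathbf{F}}(v): v\in\mathrm{scope}_{\mathbf{F}}(p),\ \mathrm{shoot}_{\mathbf{F}}(v)\gg\{U\}\}$; $\mathrm{Rise}_{\mathbf{F}}(X)=\{\mathrm{rise}_{\mathbf{F}}(p,U):p\in X,\ U\text{ a neighbourhood of }p\text{ in }X\}$. $\mathbf{F}$ is locally strict if each non-maximal leaf $\mathbf{F}_x$ is the disjoint union of $\mathbf{F}_s$, $s\in\mathrm{sons}(x)$; has strict branches if it has a node and for each branch $B$, $\bigcap_{x\in B}\mathbf{F}_x$ is a singleton; is open in $X$ if all leaves are open in $X$; is a foliage $\omega,\omega$-tree if its skeleton is order-isomorphic to $({}^{<\omega}\omega,\subsetneq)$. A Baire foliage tree on $X$ is an open in $X$, locally strict foliage $\omega,\omega$-tree with strict branches and $\mathbf{F}_{0_{\mathbf{F}}}=X$. $\mathbf{F}$ grows into $X$ if for every $p\in X$ and neighbourhood $U$ of $p$ there is $z\in\mathrm{scope}_{\mathbf{F}}(p)$ with $\mathrm{shoot}_{\mathbf{F}}(z)\gg\{U\}$. A $\pi$-tree on $X$ is a Baire foliage tree on $X$ that grows into $X$. *)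

(* Defs.v *)
From HB Require Import structures.
From mathcomp Require Import all_boot all_order all_algebra.
From mathcomp Require Import boolp classical_sets cardinality reals.
Set Implicit Arguments. Unset Strict Implicit. Unset Printing Implicit Defensive.
Import Order.TTheory GRing.Theory Num.Theory.
Local Open Scope classical_set_scope.
Local Open Scope ring_scope.

Definition baire_open (U : set (nat -> nat)) : Prop :=
  forall p, U p -> exists n : nat,
    forall q : nat -> nat, (forall i, (i < n)%N -> q i = p i) -> U q.

Definition sorgenfrey_open (R : realType) (U : set R) : Prop :=
  forall p, U p -> exists b : R, p < b /\ [set x | p <= x /\ x < b] `<=` U.

Definition subspace_open (T : Type) (op : set T -> Prop) (X : set T)
  (U : set T) : Prop := exists V, op V /\ U = V `&` X.

Definition nbhd_in (T : Type) (opX : set T -> Prop) (X : set T)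
  (p : T) (U : set T) : Prop :=
  U `<=` X /\ exists W, opX W /\ W p /\ W `<=` U.

(* ---------- Foliage omega,omega-trees ----------
   The skeleton is ({}^{<omega}omega, strict prefix) itself; a foliage tree
   is a map F : seq nat -> set T (F x = leaf at node x). *)
Definition sprefix (s t : seq nat) : Prop := prefix s t /\ s <> t.

Definition height (s : seq nat) : nat := size s.

Definition sons (v : seq nat) : set (seq nat) :=
  [set t | exists n : nat, t = rcons v n].

Definition chain (C : set (seq nat)) : Prop :=
  forall x y, C x -> C y -> x = y \/ sprefix x y \/ sprefix y x.

Definition branch (B : set (seq nat)) : Prop :=
  chain B /\ forall C, chain C -> B `<=` C -> C = B.

Definition gg (T : Type) (gamma delta : set (set T)) : Prop :=
  forall D, delta D -> D !=set0 ->
    exists G, gamma G /\ G !=set0 /\ G `<=` D.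

Definition cofin (T : Type) (B : set T) : set (set T) :=
  [set C | exists F, finite_set F /\ F `<=` B /\ C = B `\` F].

Definition shoot (T : Type) (F : seq nat -> set T) (v : seq nat)
  : set (set T) :=
  [set U | exists C, C `<=` sons v /\ finite_set (sons v `\` C) /\
                     U = \bigcup_(x in C) F x].

Definition scope (T : Type) (F : seq nat -> set T) (p : T) : set (seq nat) :=
  [set x | F x p].

Definition rise (T : Type) (F : seq nat -> set T) (p : T) (U : set T)
  : set nat :=
  [set n | exists v, scope F p v /\ gg (shoot F v) [set U] /\ n = height v].

Definition Rise (T : Type) (opX : set T -> Prop) (X : set T)
  (F : seq nat -> set T) : set (set nat) :=
  [set A | exists p U, X p /\ nbhd_in opX X p U /\ A = rise F p U].

Definition locally_strict (T : Type) (F : seq nat -> set T) : Prop :=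
  forall x, (exists y, sprefix x y) ->
    F x = \bigcup_(s in sons x) F s /\
    (forall s s', sons x s -> sons x s' -> s <> s' -> F s `&` F s' = set0).

Definition strict_branches (T : Type) (F : seq nat -> set T) : Prop :=
  (exists x : seq nat, True) /\
  forall B, branch B -> exists p : T, \bigcap_(x in B) F x = [set p].

Definition open_in (T : Type) (opX : set T -> Prop) (F : seq nat -> set T)
  : Prop := forall x, opX (F x).

Definition baire_foliage_tree (T : Type) (opX : set T -> Prop) (X : set T)
  (F : seq nat -> set T) : Prop :=
  open_in opX F /\ locally_strict F /\ strict_branches F /\ F [::] = X.

Definition grows_into (T : Type) (opX : set T -> Prop) (X : set T)
  (F : seq nat -> set T) : Prop :=
  forall p U, X p -> nbhd_in opX X p U ->
    exists z, scope F p z /\ gg (shoot F z) [set U].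

Definition pi_tree (T : Type) (opX : set T -> Prop) (X : set T)
  (F : seq nat -> set T) : Prop :=
  baire_foliage_tree opX X F /\ grows_into opX X F.

(* Main.v *)
Require Import Defs.
From HB Require Import structures.
From mathcomp Require Import all_boot all_order all_algebra.
From mathcomp Require Import boolp classical_sets cardinality reals.
From mathcomp Require Import ring lra.
Import Order.TTheory GRing.Theory Num.Theory.
Set Implicit Arguments. Unset Strict Implicit.
Local Open Scope classical_set_scope.

Lemma prefix_nthP (s t : seq nat) :
  prefix s t <-> ((size s <= size t)%N /\ forall i, (i < size s)%N -> nth 0%N s i = nth 0%N t i).
Proof.
rewrite prefixE; split.
- move/eqP=> E; split; first by rewrite -E size_take; apply: geq_minr.
  by move=> i Hi; rewrite -{1}E nth_take.
- move=> [Hs Hn]; apply/eqP; apply: (@eq_from_nth _ 0%N).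
    by rewrite size_takel.
  move=> i; rewrite size_takel // => Hi.
  by rewrite nth_take // Hn.
Qed.

Lemma prefix_eq_size (s t : seq nat) : prefix s t -> size s = size t -> s = t.
Proof.
move/prefix_nthP=> [_ H] E; apply: (@eq_from_nth _ 0%N) => // i Hi; exact: H.
Qed.

Lemma prefix_common (x y z : seq nat) : prefix x z -> prefix y z -> prefix x y \/ prefix y x.
Proof.
move=> /prefix_nthP [Hx Nx] /prefix_nthP [Hy Ny].
case: (leqP (size x) (size y)) => H.
- left; apply/prefix_nthP; split => // i Hi; rewrite Nx // Ny //; exact: leq_trans Hi H.
- right; apply/prefix_nthP; split; first exact: ltnW.
  move=> i Hi; rewrite Nx ?Ny //; exact: ltn_trans Hi H.
Qed.

Lemma chainE (C : set (seq nat)) : chain C <-> forall x y, C x -> C y -> prefix x y \/ prefix y x.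
Proof.
split.
- move=> H x y Cx Cy; case: (H x y Cx Cy) => [->|[[? _]|[? _]]]; by [left; exact: prefix_refl | left | right].
- move=> H x y Cx Cy; case: (H x y Cx Cy) => P.
  + have [->|ne] := eqVneq x y; first by left.
    by right; left; split => // E; move: ne; rewrite E eqxx.
  + have [->|ne] := eqVneq x y; first by left.
    by right; right; split => // E; move: ne; rewrite E eqxx.
Qed.

Lemma branch_mkseq (B : set (seq nat)) : branch B ->
  exists g : nat -> nat, forall s, B s <-> exists n, s = mkseq g n.
Proof.
move=> [/chainE Hc Hmax].
have add : forall t, (forall x, B x -> prefix x t \/ prefix t x) -> B t.
  move=> t Ht.
  have E : B `|` [set t] = B.
    apply: Hmax; last by move=> x Bx; left.
    apply/chainE => x y [Bx|->] [By|->].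
    - exact: Hc.
    - exact: Ht.
    - by case: (Ht y By) => ?; [right|left].
    - by left; exact: prefix_refl.
  by rewrite -E; right.
have down : forall s t, B s -> prefix t s -> B t.
  move=> s t Bs Pts; apply: add => x Bx.
  case: (Hc x s Bx Bs) => P.
  - exact: prefix_common P Pts.
  - by right; exact: prefix_trans Pts P.
have lev : forall n, exists s, B s /\ size s = n.
  elim=> [|n [s [Bs Ss]]].
  - exists [::]; split => //; apply: add => x _; right; exact: prefix0s.
  - have [[t [Bt St]]|N] := pselect (exists t, B t /\ (n < size t)%N).
    + exists (take n.+1 t); split; first exact: down Bt (prefix_take _ _).
      by rewrite size_takel.
    + exists (rcons s 0%N); split; last by rewrite size_rcons Ss.
      apply: add => x Bx; left.
      case: (Hc x s Bx Bs) => P; first exact: prefix_trans P (prefix_rcons _ _).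
      have Sx : size x = n.
        have h1 : (n <= size x)%N by rewrite -Ss size_prefix.
        have h2 : (size x <= n)%N by rewrite leqNgt; apply/negP => H; apply: N; exists x.
        by apply/eqP; rewrite eqn_leq h1 h2.
      have E : s = x := prefix_eq_size P (etrans Ss (esym Sx)).
      rewrite -E; exact: prefix_rcons.
have uniq : forall s t, B s -> B t -> size s = size t -> s = t.
  move=> s t Bs Bt E; case: (Hc s t Bs Bt) => P; first exact: prefix_eq_size P E.
  by apply/esym; apply: prefix_eq_size P _.
pose h n := xget [::] [set s | B s /\ size s = n].
have hP : forall n, B (h n) /\ size (h n) = n by move=> n; exact: (xgetPex [::] (lev n)).
pose g i := nth 0%N (h i.+1) i.
have hE : forall n, h n = mkseq g n.
  move=> n; apply: (@eq_from_nth _ 0%N); first by rewrite size_mkseq (hP n).2.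
  move=> i; rewrite (hP n).2 => Hi; rewrite nth_mkseq //.
  rewrite /g; case: (Hc (h n) (h i.+1) (hP n).1 (hP i.+1).1) => /prefix_nthP [Hs Hn].
  - have E : n = i.+1 by move: Hs; rewrite (hP n).2 (hP i.+1).2 => Hs; apply/eqP; rewrite eqn_leq Hs Hi.
    by rewrite E.
  - by apply/esym; apply: Hn; rewrite (hP i.+1).2.
exists g => s; split.
- move=> Bs; exists (size s); rewrite -hE; apply: uniq => //; first exact: (hP _).1.
  by rewrite (hP _).2.
- by move=> [n ->]; rewrite -hE; exact: (hP n).1.
Qed.

Lemma rise_intro T (F : seq nat -> set T) p U v K :
  F v p -> (forall k, (K <= k)%N -> F (rcons v k) `<=` U) ->
  (exists y, F (rcons v K) y) -> rise F p U (size v).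
Proof.
move=> Fv HU [y Hy]; exists v; split => //; split => // D ->{D} _.
exists (\bigcup_(x in [set rcons v k | k in [set k | (K <= k)%N]]) F x); split; last split.
- exists [set rcons v k | k in [set k | (K <= k)%N]]; split; last split => //.
    by move=> x [k _ <-]; exists k.
  apply: (@sub_finite_set _ _ [set rcons v k | k in `I_K]); last exact/finite_image/finite_II.
  move=> x [[k ->]] H; exists k => //=; rewrite ltnNge; apply/negP => Hk; apply: H; by exists k.
- exists y; exists (rcons v K) => //; by exists K => /=.
- by move=> z [x [k Hk <-]]; apply: HU.
Qed.

Lemma gg_cofin_all (D : set (set nat)) :
  (forall A, D A -> exists N, forall n, (N <= n)%N -> A n) -> gg (cofin setT) D.
Proof.
move=> H A DA _; have [N HN] := H A DA.
exists (setT `\` `I_N); split; last split.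
- by exists `I_N; split => //; exact: finite_II.
- by exists N => /=; split => //; rewrite ltnn.
- by move=> n [_ /negP]; rewrite -leqNgt; apply: HN.
Qed.

Lemma gg_cofin_odd (D : set (set nat)) :
  (forall A, D A -> exists N, forall n, (N <= n)%N -> odd n -> A n) ->
  gg (cofin [set m : nat | exists n : nat, m = (2 * n + 1)%N]) D.
Proof.
move=> H A DA _; have [N HN] := H A DA.
pose O := [set m : nat | exists n : nat, m = (2 * n + 1)%N].
exists (O `\` (O `&` `I_N)); split; last split.
- exists (O `&` `I_N); split; [|split; [by move=> x [] | by []]].
  apply: (@sub_finite_set _ _ `I_N); [by move=> x [] | exact: finite_II].
- exists (2 * N + 1)%N; split; first by exists N.
  move=> [_ /=]; rewrite ltnNge; apply/negP; rewrite negbK.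
  by rewrite -addn1 mul2n -addnn -addnA leq_addr.
- move=> n [[k ->] Hn]; apply: HN.
  + rewrite leqNgt; apply/negP => Hk; apply: Hn; split => //; by exists k.
  + by rewrite addn1 /= mul2n odd_double.
Qed.

Definition bF (s : seq nat) : set (nat -> nat) :=
  [set q | forall i, (i < size s)%N -> q i = nth 0%N s i].

Lemma bF_rcons v k q : bF (rcons v k) q <-> bF v q /\ q (size v) = k.
Proof.
rewrite /bF size_rcons; split.
- move=> H; split.
  + move=> i Hi; rewrite H ?nth_rcons ?Hi //; exact: ltnW.
  + by rewrite H // nth_rcons ltnn eqxx.
- move=> [H1 H2] i; rewrite ltnS leq_eqVlt => /orP [/eqP ->|Hi].
  + by rewrite nth_rcons ltnn eqxx.
  + by rewrite nth_rcons Hi H1.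
Qed.

Lemma partA :
  exists F : seq nat -> set (nat -> nat),
     pi_tree (subspace_open baire_open setT) setT F /\
     gg (cofin (@setT nat)) (Rise (subspace_open baire_open setT) setT F).
Proof.
have riseA : forall p U, nbhd_in (subspace_open baire_open setT) setT p U ->
    exists N, forall n, (N <= n)%N -> rise bF p U n.
  move=> p U [_ [W [[V [HV ->]] [[Vp _] WU]]]].
  have [N HN] := HV p Vp.
  exists N => n Nn.
  have Hv : bF (mkseq p n) p by move=> i; rewrite size_mkseq => Hi; rewrite nth_mkseq.
  rewrite -(size_mkseq p n); apply: (rise_intro (K := p n)) => //.
  - move=> k _ q /bF_rcons [Hq _]; apply: WU; split => //; apply: HN => i Hi.
    by rewrite Hq ?size_mkseq ?nth_mkseq //; exact: leq_trans Hi Nn.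
  - by exists p; apply/bF_rcons; rewrite size_mkseq.
exists bF; split; first split; first split.
- move=> x; exists (bF x); split; last by rewrite setIT.
  move=> p Hp; exists (size x) => q Hq i Hi; rewrite Hq //; exact: Hp.
- split; [|split].
  + move=> x _; split.
    * apply/seteqP; split.
      - by move=> q Hq; exists (rcons x (q (size x))); [by exists (q (size x)) | apply/bF_rcons].
      - by move=> q [s [k ->] /bF_rcons []].
    * move=> s s' [k ->] [k' ->] ne; apply/seteqP; split => // q [/bF_rcons [_ E1] /bF_rcons [_ E2]].
      by apply: ne; rewrite -E1 -E2.
  + split; first by exists [::].
    move=> B /branch_mkseq [g Hg]; exists g; apply/seteqP; split.
    * move=> q Hq; apply: funext => i.
      have := Hq (mkseq g i.+1); rewrite /bF size_mkseq => H.
      by rewrite H //; [rewrite nth_mkseq | apply/Hg; exists i.+1].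
    * move=> q -> x /Hg [n ->] i; rewrite size_mkseq => Hi; by rewrite nth_mkseq.
  + by apply/seteqP; split.
- move=> p U _ HU; have [N HN] := riseA p U HU.
  have [v [? [? ?]] ] := HN N (leqnn N); by exists v.
- apply: gg_cofin_all => A [p [U [_ [HU ->]]]]; exact: riseA.
Qed.

Section Sorg.
Variable R : realType.
Local Open Scope ring_scope.

Definition hp (k : nat) : R := (2%:R ^+ k)^-1.
Lemma hp_gt0 k : 0 < hp k. Proof. by rewrite invr_gt0 exprn_gt0 // ltr0n. Qed.
Lemma hpS k : hp k.+1 = hp k / 2. Proof. by rewrite /hp exprS invfM mulrC. Qed.
Lemma hp0 : hp 0 = 1. Proof. by rewrite /hp expr0 invr1. Qed.
Lemma hpS_lt k : hp k.+1 < hp k. Proof. rewrite hpS; have := hp_gt0 k; lra. Qed.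
Lemma hp_le1 k : hp k <= 1.
Proof. elim: k => [|k IH]; first by rewrite hp0. rewrite hpS; have := hp_gt0 k; lra. Qed.
Lemma hp_half k : hp k.+1 <= 1/2. Proof. rewrite hpS; have := hp_le1 k; lra. Qed.
Lemma hp_mono k n : hp (k + n) <= hp k.
Proof.
elim: n => [|n IH]; first by rewrite addn0.
rewrite addnS; apply: le_trans IH; exact: ltW (hpS_lt _).
Qed.
Lemma hp_anti k k' : (k <= k')%N -> hp k' <= hp k.
Proof. by move/subnKC <-; apply: hp_mono. Qed.
Lemma hp_small d : 0 < d -> exists K, hp K < d.
Proof.
move=> d0; exists (Num.truncn (d^-1)); set K := Num.truncn _.
have H1 : d^-1 < K.+1%:R := truncnS_gt _.
have H2 : (K.+1%:R : R) <= 2%:R ^+ K.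
  by rewrite -natrX ler_nat; apply: ltn_expl.
have H3 : d * d^-1 = 1 by rewrite mulfV // gt_eqF.
have H4 : hp K * 2%:R ^+ K = 1 by rewrite /hp mulVf // expf_neq0 // pnatr_eq0.
have H5 := hp_gt0 K.
have H6 : 0 < (2%:R ^+ K : R) by rewrite exprn_gt0 // ltr0n.
nra.
Qed.
Lemma hp_small2 d : 0 < d -> exists K, forall k, (K <= k)%N -> hp k < d.
Proof.
move=> /hp_small [K HK]; exists K => k Kk; apply: le_lt_trans HK; exact: hp_anti.
Qed.


Lemma first_switch (P : nat -> Prop) : ~ P 0%N -> (exists m, P m) -> exists k, ~ P k /\ P k.+1.
Proof.
move=> P0 [m Pm]; apply: contrapT => H.
have : forall k, ~ P k.
  elim=> // k IH Pk; apply: H; by exists k.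
by move/(_ m).
Qed.

Definition inI (st : R * R) (x : R) := st.1 <= x /\ x < st.2.

Definition gs (a b : R) (k : nat) : R * R := (b - (b - a) * hp k, b - (b - a) * hp k.+1).
Definition ra (d b : R) (k : nat) : R * R := (d + (b - d) * hp k.+1, d + (b - d) * hp k).

Lemma gs_sub a b k : a < b -> a <= (gs a b k).1 /\ (gs a b k).1 < (gs a b k).2 /\ (gs a b k).2 < b.
Proof.
move=> ab; rewrite /gs /=; have := hp_le1 k; have := hpS_lt k; have := hp_gt0 k.+1.
move=> *; split; [nra|split; nra].
Qed.

Lemma gs_len a b k : a < b -> (gs a b k).2 - (gs a b k).1 <= (b - a) / 2.
Proof.
move=> ab; rewrite /gs /=; have H := hp_half k; have E := hpS k.
have -> : (b - (b - a) * hp k.+1 - (b - (b - a) * hp k)) = (b - a) * hp k.+1.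
  by rewrite E; field.
nra.
Qed.

Lemma gs_cover a b x : a < b -> a <= x -> x < b -> exists k, inI (gs a b k) x.
Proof.
move=> ab ax xb.
have H0 : ~ (x < (gs a b 0).1) by rewrite /gs /= hp0 mulr1; lra.
have Hex : exists m, x < (gs a b m).1.
  have : 0 < (b - x) / (b - a) by apply: divr_gt0; lra.
  move=> /hp_small [m Hm]; exists m; rewrite /gs /=.
  have E : (b - a) * ((b - x) / (b - a)) = b - x by field; lra.
  have := hp_gt0 m; nra.
have [k [H1 H2]] := first_switch H0 Hex.
- exists k; split; first by rewrite leNgt; apply/negP.
  by move: H2; rewrite /gs.
Qed.

Lemma gs_mono a b k k' : a < b -> (k < k')%N -> (gs a b k).2 <= (gs a b k').1.
Proof.
move=> ab kk; rewrite /gs /=; have := hp_anti kk; nra.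
Qed.

Lemma gs_disj a b k k' x : a < b -> inI (gs a b k) x -> inI (gs a b k') x -> k = k'.
Proof.
move=> ab [h1 h2] [h3 h4]; case: (ltngtP k k') => // kk.
- have H := gs_mono ab kk; clear kk; exfalso; lra.
- have H := gs_mono ab kk; clear kk; exfalso; lra.
Qed.

Lemma gs_tail a b p : a < b -> p < b -> exists K, forall k, (K <= k)%N -> p <= (gs a b k).1.
Proof.
move=> ab pb.
have : 0 < (b - p) / (b - a) by apply: divr_gt0; lra.
move=> /hp_small2 [K HK]; exists K => k Kk; rewrite /gs /=.
have E : (b - a) * ((b - p) / (b - a)) = b - p by field; lra.
have := HK k Kk; nra.
Qed.

Lemma ra_sub d b k : d < b -> d < (ra d b k).1 /\ (ra d b k).1 < (ra d b k).2 /\ (ra d b k).2 <= b.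
Proof.
move=> ab; rewrite /ra /=; have := hp_le1 k; have := hpS_lt k; have := hp_gt0 k.+1.
move=> *; split; [nra|split; nra].
Qed.

Lemma ra_len d b k : d < b -> (ra d b k).2 - (ra d b k).1 <= (b - d) / 2.
Proof.
move=> ab; rewrite /ra /=; have H := hp_half k; have E := hpS k.
have -> : (d + (b - d) * hp k - (d + (b - d) * hp k.+1)) = (b - d) * hp k.+1.
  by rewrite E; field.
nra.
Qed.

Lemma ra_cover d b x : d < x -> x < b -> exists k, inI (ra d b k) x.
Proof.
move=> dx xb.
have H0 : ~ ((ra d b 0).2 <= x) by rewrite /ra /= hp0 mulr1; lra.
have Hex : exists m, (ra d b m).2 <= x.
  have : 0 < (x - d) / (b - d) by apply: divr_gt0; lra.
  move=> /hp_small [m Hm]; exists m; rewrite /ra /=.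
  have E : (b - d) * ((x - d) / (b - d)) = x - d by field; lra.
  have := hp_gt0 m; nra.
have [k [H1 H2]] := first_switch H0 Hex.
- exists k; split; first by move: H2; rewrite /ra.
  by rewrite ltNge; apply/negP.
Qed.

Lemma ra_mono d b k k' : d < b -> (k < k')%N -> (ra d b k').2 <= (ra d b k).1.
Proof.
move=> ab kk; rewrite /ra /=; have := hp_anti kk; nra.
Qed.

Lemma ra_disj d b k k' x : d < b -> inI (ra d b k) x -> inI (ra d b k') x -> k = k'.
Proof.
move=> ab [h1 h2] [h3 h4]; case: (ltngtP k k') => // kk.
- have H := ra_mono ab kk; clear kk; exfalso; lra.
- have H := ra_mono ab kk; clear kk; exfalso; lra.
Qed.


Definition asp (a d b : R) (k : nat) : R * R :=
  if a < d then (if odd k then gs a d k./2 else ra d b k./2) else ra d b k.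

Definition spl (ab : R * R) (o : option R) (k : nat) : R * R :=
  match o with
  | None => gs ab.1 ab.2 k
  | Some d => if (ab.1 <= d) && (d < ab.2) then asp ab.1 d ab.2 k else gs ab.1 ab.2 k
  end.

Lemma odd_half_eq k k' : odd k = odd k' -> k./2 = k'./2 -> k = k'.
Proof. by move=> h1 h2; rewrite -(odd_double_half k) -(odd_double_half k') h1 h2. Qed.

Lemma spl_props a b o k : a < b ->
  a <= (spl (a, b) o k).1 /\ (spl (a, b) o k).1 < (spl (a, b) o k).2 /\
  (spl (a, b) o k).2 <= b /\
  (spl (a, b) o k).2 - (spl (a, b) o k).1 <= (b - a) / 2 /\
  (forall d, o = Some d -> ~ inI (spl (a, b) o k) d) /\
  (o = None -> (spl (a, b) o k).2 < b).
Proof.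
move=> ab.
case: o => [d|]; last first.
  have [h1 [h2 h3]] := gs_sub k ab; have h4 := gs_len k ab.
  split => //; split => //; split; [exact: ltW|split => //; split => //; by move=> ? []].
rewrite /spl /=; case: ifP => [/andP [ad db]|nd].
- have raP : forall j, a <= (ra d b j).1 /\ (ra d b j).1 < (ra d b j).2 /\
      (ra d b j).2 <= b /\ (ra d b j).2 - (ra d b j).1 <= (b - a) / 2 /\
      ~ inI (ra d b j) d.
    move=> j; have [h1 [h2 h3]] := ra_sub j db; have h4 := ra_len j db.
    split; [lra|split => //; split => //; split; [lra|rewrite /inI; lra]].
  rewrite /asp; case: ifP => ad'.
  + case: ifP => _.
    * have [h1 [h2 h3]] := gs_sub k./2 ad'; have h4 := gs_len k./2 ad'.
      split => //; split => //; split; [lra|split; [lra|split => //]].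
      by move=> d' [<-]; rewrite /inI; lra.
    * have [h1 [h2 [h3 [h4 h5]]]] := raP k./2.
      split => //; split => //; split => //; split => //; split; [by move=> d' [<-] | by []].
  + have [h1 [h2 [h3 [h4 h5]]]] := raP k.
    split => //; split => //; split => //; split => //; split; [by move=> d' [<-] | by []].
- have [h1 [h2 h3]] := gs_sub k ab; have h4 := gs_len k ab.
  split => //; split => //; split; [exact: ltW|split => //; split => //].
  move=> d' [<-] [m1 m2].
  move: nd; move/negP; apply; apply/andP; split; lra.
Qed.

Lemma spl_cover a b o x : a < b -> a <= x -> x < b -> o <> Some x ->
  exists k, inI (spl (a, b) o k) x.
Proof.
move=> ab ax xb ox.
case: o ox => [d|] ox; last exact: gs_cover.
have -> : spl (a, b) (Some d) = if (a <= d) && (d < b) then asp a d b else gs a b.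
  by apply: funext => k; rewrite /spl /=; case: ifP.
case: ifP => [/andP [ad db]|_]; last exact: gs_cover.
have xd : x != d by apply/eqP => E; apply: ox; rewrite E.
have -> : asp a d b = if a < d then (fun k => if odd k then gs a d k./2 else ra d b k./2) else ra d b.
  by apply: funext => k; rewrite /asp; case: ifP.
case: ifP => ad'.
- case: (ltgtP x d) => [xd'|dx|E]; last by move: xd; rewrite E eqxx.
  + have [j Hj] := gs_cover ad' ax xd'; exists j.*2.+1.
    by rewrite /= odd_double /= uphalf_double.
  + have [j Hj] := ra_cover dx xb; exists j.*2.
    by rewrite odd_double doubleK.
- have dx : d < x.
    have ad2 : a = d by apply/eqP; rewrite eq_le ad /= leNgt ad'.
    rewrite lt_neqAle eq_sym xd /=; rewrite -ad2 //.
  exact: ra_cover dx xb.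
Qed.

Lemma spl_disj a b o k k' x : a < b -> inI (spl (a, b) o k) x -> inI (spl (a, b) o k') x -> k = k'.
Proof.
move=> ab; case: o => [d|]; last exact: gs_disj.
rewrite /spl /=; case: ifP => [/andP [ad db]|_]; last exact: gs_disj.
rewrite /asp; case: ifP => ad'; last exact: ra_disj.
have gsl : forall j, (gs a d j).2 < d by move=> j; have [_ [_ ?]] := gs_sub j ad'.
have ral : forall j, d < (ra d b j).1 by move=> j; have [? _] := ra_sub j db.
case: ifP => ok; case: ifP => ok' h1 h2.
- by apply: odd_half_eq; [rewrite ok ok' | exact: gs_disj h1 h2].
- exfalso; case: h1 => h1 h1'; case: h2 => h2 h2'.
  have g1 := gsl k./2; have g2 := ral k'./2; clear ok ok' gsl ral; lra.
- exfalso; case: h1 => h1 h1'; case: h2 => h2 h2'.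
  have g1 := gsl k'./2; have g2 := ral k./2; clear ok ok' gsl ral; lra.
- by apply: odd_half_eq; [rewrite ok ok' | exact: ra_disj h1 h2].
Qed.

Definition zidx (k : nat) : int := if odd k then Negz k./2 else Posz k./2.
Definition rs (k : nat) : R * R := ((zidx k)%:~R, (zidx k)%:~R + 1).

Lemma rs_cover x : exists k, inI (rs k) x.
Proof.
have := floor_itv x; set z := Num.floor x => /andP [h1 h2].
have E : forall m : int, (m + 1)%:~R = m%:~R + 1 :> R by move=> m; rewrite intrD.
rewrite E in h2.
case Ez : z => [n|n].
- exists n.*2; rewrite /inI /rs /zidx odd_double doubleK /= -Ez; split => //.
- exists n.*2.+1; rewrite /inI /rs /zidx /= odd_double /= uphalf_double -Ez.
  split => //.
Qed.

Lemma rs_disj k k' x : inI (rs k) x -> inI (rs k') x -> k = k'.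
Proof.
rewrite /inI /rs /= => [[h1 h2] [h3 h4]].
have E : forall m : int, (m + 1)%:~R = m%:~R + 1 :> R by move=> m; rewrite intrD.
have Z : zidx k = zidx k'.
  have f1 := @floor_def _ x (zidx k); have f2 := @floor_def _ x (zidx k').
  rewrite -f1 ?f2 // ?E; apply/andP; split => //.
move: Z; rewrite /zidx; case: ifP => o1; case: ifP => o2 // [] H.
- by apply: odd_half_eq; rewrite ?o1 ?o2.
- by apply: odd_half_eq; rewrite ?o1 ?o2.
Qed.

End Sorg.

Section Tree.
Variable R : realType.
Local Open Scope ring_scope.
Variable X : set R.
Variable sched : nat -> option R.

Fixpoint go (lvl : nat) (ab : R * R) (s : seq nat) : R * R :=
  match s with [::] => ab | k :: s' => go lvl.+1 (spl ab (sched lvl) k) s' end.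

Definition I (s : seq nat) : R * R :=
  match s with [::] => (0, 1) | k :: s' => go 1 (rs R k) s' end.

Definition SF (s : seq nat) : set R :=
  match s with [::] => X | _ :: _ => [set x | X x /\ inI (I s) x] end.

Lemma go_rcons lvl ab s k : go lvl ab (rcons s k) = spl (go lvl ab s) (sched (lvl + size s)) k.
Proof.
elim: s lvl ab => [|k' s IH] lvl ab /=; first by rewrite addn0.
by rewrite IH addSnnS.
Qed.

Lemma I_rcons0 k : I [:: k] = rs R k. Proof. by []. Qed.

Lemma I_rcons v k : v <> [::] -> I (rcons v k) = spl (I v) (sched (size v)) k.
Proof. by case: v => // k0 s _ /=; rewrite go_rcons add1n. Qed.

Lemma SF_cons v : v <> [::] -> SF v = [set x | X x /\ inI (I v) x].
Proof. by case: v. Qed.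

Lemma spl_propsP (ab : R * R) o k : ab.1 < ab.2 ->
  ab.1 <= (spl ab o k).1 /\ (spl ab o k).1 < (spl ab o k).2 /\
  (spl ab o k).2 <= ab.2 /\
  (spl ab o k).2 - (spl ab o k).1 <= (ab.2 - ab.1) / 2 /\
  (forall d, o = Some d -> ~ inI (spl ab o k) d) /\
  (o = None -> (spl ab o k).2 < ab.2).
Proof. by case: ab => a b; apply: spl_props. Qed.

Lemma rcons_nil (v : seq nat) k : rcons v k <> [::].
Proof. by case: v. Qed.

Lemma I_len v : v <> [::] -> (I v).1 < (I v).2 /\ (I v).2 - (I v).1 <= hp R (size v).-1.
Proof.
elim/last_ind: v => // v k IH _.
case: (eqVneq v [::]) => [->|vn].
- rewrite I_rcons0 /rs /= hp0; split; lra.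
- have vn' : v <> [::] by apply/eqP.
  have [h1 h2] := IH vn'.
  have [_ [h3 [_ [h4 _]]]] := spl_propsP (sched (size v)) k h1.
  rewrite I_rcons // size_rcons /=; split => //.
  have E : hp R (size v) = hp R (size v).-1 / 2.
    by rewrite -hpS prednK // lt0n size_eq0.
  rewrite E; lra.
Qed.

Lemma I_sub v k : v <> [::] -> (I v).1 <= (I (rcons v k)).1 /\ (I (rcons v k)).2 <= (I v).2.
Proof.
move=> vn; have [h1 _] := I_len vn.
have [h2 [_ [h3 _]]] := spl_propsP (sched (size v)) k h1.
by rewrite I_rcons.
Qed.


Hypothesis H1 : forall n d, sched n = Some d -> ~ X d.
Hypothesis H2 : forall y, ~ X y -> exists m, (0 < m)%N /\ sched m = Some y.
Hypothesis H3 : forall n, exists m, (n <= m)%N /\ sched m = None.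

Lemma SF_union v : SF v = \bigcup_(s in sons v) SF s.
Proof.
apply/seteqP; split.
- move=> y Hy; case: (eqVneq v [::]) => [Ev|vn].
  + subst v; have [k Hk] := rs_cover y; exists [:: k]; first by exists k.
    by rewrite SF_cons //= I_rcons0.
  + have vn' : v <> [::] by apply/eqP.
    move: Hy; rewrite SF_cons // => -[Xy Iy].
    have [h1 _] := I_len vn'.
    have [k Hk] : exists k, inI (spl (I v) (sched (size v)) k) y.
      move: h1 Iy; case: (I v) => a b /= ab [ay yb]; apply: spl_cover => // E.
      exact: H1 E Xy.
    exists (rcons v k); first by exists k.
    by rewrite SF_cons ?I_rcons //; exact: rcons_nil.
- move=> y [s [k ->]]; rewrite SF_cons; last exact: rcons_nil.
  move=> [Xy [Iy1 Iy2]]; case: (eqVneq v [::]) => [->//|vn].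
  have vn' : v <> [::] by apply/eqP.
  have [h1 h2] := I_sub k vn'.
  rewrite SF_cons //; split => //; split; lra.
Qed.

Lemma SF_disj v s s' : sons v s -> sons v s' -> s <> s' -> SF s `&` SF s' = set0.
Proof.
move=> [k ->] [k' ->] ne; apply/seteqP; split => // y [].
rewrite !SF_cons; try exact: rcons_nil.
move=> [_ Hk] [_ Hk']; apply: ne; congr rcons.
case: (eqVneq v [::]) => [Ev|vn].
- by subst v; move: Hk Hk'; rewrite /= => Hk Hk'; exact: rs_disj Hk Hk'.
- have vn' : v <> [::] by apply/eqP.
  move: Hk Hk'; rewrite !I_rcons //.
  have [h1 _] := I_len vn'.
  move: h1; case: (I v) => a b /= ab; exact: spl_disj.
Qed.

Lemma SF_open v : subspace_open (@sorgenfrey_open R) X (SF v).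
Proof.
case: (eqVneq v [::]) => [->|vn].
- exists setT; split; last by rewrite setTI.
  by move=> p _; exists (p + 1); split; [lra|].
- have vn' : v <> [::] by apply/eqP.
  exists [set x | inI (I v) x]; split.
  + move=> p [h1 h2]; exists (I v).2; split => // x [x1 x2]; split => //; lra.
  + rewrite SF_cons //; apply/seteqP; split => x; by move=> [].
Qed.

Lemma I_mkseq (g : nat -> nat) n : I (mkseq g n.+2) = spl (I (mkseq g n.+1)) (sched n.+1) (g n.+1).
Proof.
rewrite mkseqS I_rcons ?size_mkseq //.
Qed.

Lemma mkseq_nil (g : nat -> nat) n : mkseq g n.+1 <> [::].
Proof. by rewrite mkseqS; exact: rcons_nil. Qed.

Lemma branch_point (g : nat -> nat) : exists L, forall y, (forall n, SF (mkseq g n) y) <-> y = L.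
Proof.
pose a n := (I (mkseq g n.+1)).1.
pose b n := (I (mkseq g n.+1)).2.
have ab : forall n, a n < b n /\ b n - a n <= hp R n.
  by move=> n; have := I_len (@mkseq_nil g n); rewrite size_mkseq.
have aS : forall n, a n <= a n.+1 /\ b n.+1 <= b n.
  move=> n; have := I_sub (g n.+1) (@mkseq_nil g n); rewrite -mkseqS //.
have am : forall i j, (i <= j)%N -> a i <= a j.
  move=> i j /subnKC <-; elim: (j - i)%N => [|m IH]; first by rewrite addn0.
  rewrite addnS; apply: le_trans IH _; exact: (aS _).1.
have bm : forall i j, (i <= j)%N -> b j <= b i.
  move=> i j /subnKC <-; elim: (j - i)%N => [|m IH]; first by rewrite addn0.
  rewrite addnS; apply: le_trans _ IH; exact: (aS _).2.
have aleb : forall i j, a i <= b j.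
  move=> i j; apply: (@le_trans _ _ (a (maxn i j))); first by apply: am; exact: leq_maxl.
  apply: (@le_trans _ _ (b (maxn i j))); first exact: ltW (ab _).1.
  by apply: bm; exact: leq_maxr.
have hs : has_sup (range a).
  split; first by exists (a 0%N); exists 0%N.
  by exists (b 0%N) => x [i _ <-]; exact: aleb.
pose L := sup (range a).
have aL : forall n, a n <= L by move=> n; apply: sup_upper_bound => //; exists n.
have Lb : forall n, L < b n.
  move=> n; have [m [nm Hm]] := H3 n.+1.
  case: m nm Hm => // j nj Hj.
  have [h1 [_ [_ [_ [_ h6]]]]] := spl_propsP (sched j.+1) (g j.+1) (ab j).1.
  have bj : b j.+1 < b j by rewrite /b I_mkseq; exact: h6.
  have Lb' : L <= b j.+1 by apply: ge_sup; [exists (a 0%N); exists 0%N | move=> x [i _ <-]; exact: aleb].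
  apply: (le_lt_trans Lb'); apply: (lt_le_trans bj); exact: bm.
have XL : X L.
  apply: contrapT => nX; have [m [m0 Hm]] := H2 nX.
  case: m m0 Hm => // j _ Hj.
  have [_ [_ [_ [_ [h5 _]]]]] := spl_propsP (sched j.+1) (g j.+1) (ab j).1.
  apply: (h5 L Hj); rewrite -I_mkseq; split; [exact: aL|exact: Lb].
exists L => y; split.
- move=> Hy.
  have yab : forall n, a n <= y /\ y < b n.
    by move=> n; have := Hy n.+1; rewrite SF_cons; [move=> [_ []] | exact: mkseq_nil].
  case: (ltgtP y L) => // yL.
  + have [K HK] := @hp_small R (L - y) ltac:(by rewrite subr_gt0).
    have := yab K; have := ab K; have := aL K; have := Lb K; lra.
  + have [K HK] := @hp_small R (y - L) ltac:(by rewrite subr_gt0).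
    have := yab K; have := ab K; have := aL K; have := Lb K; lra.
- move=> -> [|n] //; rewrite SF_cons; last exact: mkseq_nil.
  split => //; split; [exact: aL|exact: Lb].
Qed.

Lemma SF_nonempty v : exists y, SF v y.
Proof.
have [L HL] := branch_point (fun i => nth 0%N v i).
exists L; have := (HL L).2 erefl (size v).
by rewrite mkseq_nth.
Qed.

Lemma node_exists p : X p -> forall n, exists v, size v = n /\ SF v p.
Proof.
move=> Xp; elim=> [|n [v [Sv Hv]]]; first by exists [::].
move: Hv; rewrite SF_union => -[s [k ->] Hs]; exists (rcons v k).
by rewrite size_rcons Sv.
Qed.

Lemma SF_rise p U : X p -> nbhd_in (subspace_open (@sorgenfrey_open R) X) X p U ->
  exists N, forall n, (N <= n)%N -> sched n = None -> rise SF p U n.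
Proof.
move=> Xp [UX [W [[V [HV ->]] [[Vp _] WU]]]].
have [b0 [pb0 Hb0]] := HV p Vp.
have [K HK] := @hp_small2 R (b0 - p) ltac:(by rewrite subr_gt0).
exists K.+1 => n Kn Hn.
have [v [Sv Hv]] := node_exists Xp n.
have vn : v <> [::] by move=> E; move: Sv Kn; rewrite E /= => <-.
have [h1 h2] := I_len vn.
move: Hv; rewrite SF_cons // => -[_ [pa pb]].
have hK : hp R (size v).-1 < b0 - p by apply: HK; rewrite Sv -ltnS prednK // (leq_trans _ Kn).
have [K' HK'] := gs_tail h1 pb.
rewrite -Sv; apply: (rise_intro (K := K')).
- by rewrite SF_cons //.
- move=> k Kk y; rewrite SF_cons; last exact: rcons_nil.
  rewrite I_rcons // Sv Hn /= => -[Xy [y1 y2]].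
  have := HK' k Kk; have [_ [_ h3]] := gs_sub k h1.
  move=> h4; apply: WU; split => //; apply: Hb0; split; lra.
- exact: SF_nonempty.
Qed.

Lemma SF_pi_tree : pi_tree (subspace_open (@sorgenfrey_open R) X) X SF.
Proof.
split; first split.
- move=> x; exact: SF_open.
- split; [|split].
  + move=> x _; split; first exact: SF_union.
    exact: SF_disj.
  + split; first by exists [::].
    move=> B /branch_mkseq [g Hg].
    have [L HL] := branch_point g.
    exists L; apply/seteqP; split.
    * move=> y Hy; apply/(HL y) => n; apply: Hy; apply/Hg; by exists n.
    * move=> y -> x /Hg [n ->]; exact: (proj2 (HL L) erefl n).
  + by [].
- move=> p U Xp HU; have [N HN] := SF_rise Xp HU.
  have [m [Nm Hm]] := H3 N.
  have [v [? [? ?]]] := HN m Nm Hm; by exists v.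
Qed.

End Tree.

Local Open Scope ring_scope.

Lemma partB (R : realType) : exists G : seq nat -> set R,
     pi_tree (subspace_open (@sorgenfrey_open R) setT) setT G /\
     gg (cofin (@setT nat))
        (Rise (subspace_open (@sorgenfrey_open R) setT) setT G).
Proof.
pose sched := fun _ : nat => @None R.
have H1 : forall n d, sched n = Some d -> ~ setT d by [].
have H2 : forall y, ~ (@setT R) y -> exists m, (0 < m)%N /\ sched m = Some y by move=> y [].
have H3 : forall n, exists m, (n <= m)%N /\ sched m = None by move=> n; exists n.
exists (SF setT sched); split; first exact: SF_pi_tree.
apply: gg_cofin_all => A [p [U [Xp [HU ->]]]].
have [N HN] := SF_rise H1 H2 H3 Xp HU.
by exists N => n Nn; apply: HN.
Qed.

Lemma partC (R : realType) (X : set R) : countable (~` X) ->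
     exists H : seq nat -> set R,
       pi_tree (subspace_open (@sorgenfrey_open R) X) X H /\
       gg (cofin [set m : nat | exists n : nat, m = (2 * n + 1)%N])
          (Rise (subspace_open (@sorgenfrey_open R) X) X H).
Proof.
move=> /countable_injP [f finj].
pose e j := xget (0 : R) [set y | ~ X y /\ f y = j].
pose sched n := if odd n then None else
  match pselect (~ X (e (n./2).-1)) with left _ => Some (e (n./2).-1) | right _ => None end.
have H1 : forall n d, sched n = Some d -> ~ X d.
  move=> n d; rewrite /sched; case: ifP => // _.
  by case: pselect => // H [<-].
have H2 : forall y, ~ X y -> exists m, (0 < m)%N /\ sched m = Some y.
  move=> y Xy; exists (f y).+1.*2; split => //.
  rewrite /sched odd_double doubleK /=.
  have [h1 h2] : ~ X (e (f y)) /\ f (e (f y)) = f y.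
    exact: (xgetPex (0 : R) (ex_intro (fun z => ~ X z /\ f z = f y) y (conj Xy erefl))).
  have E : e (f y) = y.
    by apply: finj => //; rewrite inE.
  by rewrite E; case: pselect.
have H3 : forall n, exists m, (n <= m)%N /\ sched m = None.
  move=> n; exists n.*2.+1; split; first by rewrite -addnn -addnS leq_addr.
  by rewrite /sched /= odd_double.
exists (SF X sched); split; first exact: SF_pi_tree.
apply: gg_cofin_odd => A [p [U [Xp [HU ->]]]].
have [N HN] := SF_rise H1 H2 H3 Xp HU.
exists N => n Nn on; apply: HN => //.
by rewrite /sched on.
Qed.

Theorem lemma19 (R : realType) :
  (* (a) Baire space *)
  (exists F : seq nat -> set (nat -> nat),
     pi_tree (subspace_open baire_open setT) setT F /\
     gg (cofin (@setT nat)) (Rise (subspace_open baire_open setT) setT F)) /\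
  (* (b) Sorgenfrey line *)
  (exists G : seq nat -> set R,
     pi_tree (subspace_open (@sorgenfrey_open R) setT) setT G /\
     gg (cofin (@setT nat))
        (Rise (subspace_open (@sorgenfrey_open R) setT) setT G)) /\
  (* (c) co-countable subspaces of the Sorgenfrey line *)
  (forall X : set R, countable (~` X) ->
     exists H : seq nat -> set R,
       pi_tree (subspace_open (@sorgenfrey_open R) X) X H /\
       gg (cofin [set m : nat | exists n : nat, m = (2 * n + 1)%N])
          (Rise (subspace_open (@sorgenfrey_open R) X) X H)).
Proof.
split; first exact: partA.
split; first exact: partB.
exact: partC.
Qed.
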